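(* Consider on the $\mathbb{Z}^2$ graph the system ($m\mathcal{H}1$) $$u_2=v+t\frac{p-q}{s-t},\qquad v_1=u+s\frac{p-q}{s-t},\qquad s_2=\frac{1}{t}+\frac{p-q}{t(u-v)},\qquad t_1=\frac{1}{s}+\frac{p-q}{s(u-v)}.$$ This bond system corresponds to the vertex system ($d$-$H2$) $$2(z_{12}-z)(x_2-x_1)+(p-q)(x_1+x_2)=0,\qquad 2(x_{12}-x)(z_2-z_1)+(p-q)(x_{12}+x)=0,$$ in the sense that, writing $s=x_1/x$, $t=x_2/x$, $u=z_1+z-\frac{p}{2}$, $v=z_2+z-\frac{q}{2}$ with potential functions $x,z$ on the vertices, the system $m\mathcal{H}1$ becomes exactly $d$-$H2$; moreover the vertex system $d$-$H2$ is 3D-compatible.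
   Context: $u,s$ are functions on horizontal edges $\{(m,n),(m+1,n)\}$ and $v,t$ on vertical edges $\{(m,n),(m,n+1)\}$ of the $\mathbb{Z}^2$ graph; for a square with lower-left vertex $(m,n)$, $u,s$ sit on the bottom edge, $v,t$ on the left edge, $u_2,s_2$ on the top edge, $v_1,t_1$ on the right edge; $p$ depends only on $m$, $q$ only on $n$. For vertex functions, $x=x_{m,n}$, $x_1=x_{m+1,n}$, $x_2=x_{m,n+1}$, $x_{12}=x_{m+1,n+1}$, and similarly for $z$. A two-component vertex system on $\mathbb{Z}^2$ is 3D-compatible if, when it is imposed on every face of a cube in $\mathbb{Z}^3$ (with lattice parameters $p_1,p_2,p_3$ attached to the three directions), the values $(x_{123},z_{123})$ at the vertex opposite to the origin computed in the three possible ways coincide. *)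

(* Defs.v *)
From HB Require Import structures.
From mathcomp Require Import all_boot all_order all_algebra.
Set Implicit Arguments. Unset Strict Implicit. Unset Printing Implicit Defensive.
Import Order.TTheory GRing.Theory Num.Theory.
Local Open Scope ring_scope.

Section Defs.
Variable F : numFieldType.

(* Bond system mH1 on one square: u,s bottom edge, v,t left edge,
   u2,s2 top edge, v1,t1 right edge; p = p(m), q = q(n). *)
Definition mH1 (p q u v s t u2 v1 s2 t1 : F) : Prop :=
  [/\ u2 = v + t * (p - q) / (s - t),
      v1 = u + s * (p - q) / (s - t),
      s2 = 1 / t + (p - q) / (t * (u - v))
    & t1 = 1 / s + (p - q) / (s * (u - v))].

Definition dH2 (p q x x1 x2 x12 z z1 z2 z12 : F) : Prop :=
  2 * (z12 - z) * (x2 - x1) + (p - q) * (x1 + x2) = 0 /\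
  2 * (x12 - x) * (z2 - z1) + (p - q) * (x12 + x) = 0.

Definition s_of (x : int -> int -> F) (m n : int) : F := x (m + 1) n / x m n.
Definition t_of (x : int -> int -> F) (m n : int) : F := x m (n + 1) / x m n.
Definition u_of (p : int -> F) (z : int -> int -> F) (m n : int) : F :=
  z (m + 1) n + z m n - p m / 2.
Definition v_of (q : int -> F) (z : int -> int -> F) (m n : int) : F :=
  z m (n + 1) + z m n - q n / 2.

(* Genericity of a square for d-H2, as a condition on the data from which
   (x12, z12) is computed: the coefficient of z12 in the first equation and
   the coefficient of x12 in the second equation are nonzero. *)
Definition dH2_generic (p q x x1 x2 z z1 z2 : F) : Prop :=
  x1 != x2 /\ 2 * (z2 - z1) + (p - q) != 0.

(* Directions 1,2,3 carry the
   lattice parameters p1,p2,p3; on a face spanned by directions i < j the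
   system is imposed as Q p_i p_j (...). *)
Definition threeD_compatible
    (Q : F -> F -> F -> F -> F -> F -> F -> F -> F -> F -> Prop)
    (G : F -> F -> F -> F -> F -> F -> F -> F -> Prop) : Prop :=
  forall (p1 p2 p3 x x1 x2 x3 z z1 z2 z3 x12 x13 x23 z12 z13 z23 : F),
    G p1 p2 x x1 x2 z z1 z2 -> G p1 p3 x x1 x3 z z1 z3 ->
    G p2 p3 x x2 x3 z z2 z3 ->
    G p2 p3 x1 x12 x13 z1 z12 z13 -> G p1 p3 x2 x12 x23 z2 z12 z23 ->
    G p1 p2 x3 x13 x23 z3 z13 z23 ->
    Q p1 p2 x x1 x2 x12 z z1 z2 z12 ->
    Q p1 p3 x x1 x3 x13 z z1 z3 z13 ->
    Q p2 p3 x x2 x3 x23 z z2 z3 z23 ->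
    exists x123 z123 : F,
      [/\ Q p2 p3 x1 x12 x13 x123 z1 z12 z13 z123,
          Q p1 p3 x2 x12 x23 x123 z2 z12 z23 z123,
          Q p1 p2 x3 x13 x23 x123 z3 z13 z23 z123 &
          forall X Z : F,
            [/\ Q p2 p3 x1 x12 x13 X z1 z12 z13 Z -> X = x123 /\ Z = z123,
                Q p1 p3 x2 x12 x23 X z2 z12 z23 Z -> X = x123 /\ Z = z123 &
                Q p1 p2 x3 x13 x23 X z3 z13 z23 Z -> X = x123 /\ Z = z123]].

End Defs.

(* Main.v *)
From HB Require Import structures.
Require Import Defs.
From mathcomp Require Import all_boot all_order all_algebra ring.
Import Order.TTheory GRing.Theory Num.Theory.
Local Open Scope ring_scope.

Lemma mul_eq0_r {F : numFieldType} {a b : F} : a != 0 -> a * b = 0 -> b = 0.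
Proof. by move=> ha /eqP; rewrite mulf_eq0 (negbTE ha) => /eqP. Qed.

Lemma part1 (F : numFieldType) (p q x x1 x2 x12 z z1 z2 z12 : F) :
  x != 0 -> x1 != 0 -> x2 != 0 -> x1 / x - x2 / x != 0 ->
  (z1 + z - p / 2) - (z2 + z - q / 2) != 0 ->
  mH1 p q (z1 + z - p / 2) (z2 + z - q / 2) (x1 / x) (x2 / x)
      (z12 + z2 - p / 2) (z12 + z1 - q / 2) (x12 / x2) (x12 / x1) <->
  dH2 p q x x1 x2 x12 z z1 z2 z12.
Proof.
move=> hx hx1 hx2 hst huv.
have hd : x1 - x2 != 0.
  apply: contra hst => /eqP h; apply/eqP.
  by rewrite -mulrBl h mul0r.
have hd' : x2 - x1 != 0 by rewrite -opprB oppr_eq0.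
have hw : (z1 + z) * 2 - p - ((z2 + z) * 2 - q) != 0.
  apply: contra huv => /eqP h; apply/eqP.
  have -> : z1 + z - p / 2 - (z2 + z - q / 2) = ((z1 + z) * 2 - p - ((z2 + z) * 2 - q)) / 2 by field.
  by rewrite h mul0r.
have i1 : 2 * (z12 - z) * (x2 - x1) + (p - q) * (x1 + x2) = 2 * (x2 - x1) * ((z12 + z2 - p / 2) - ((z2 + z - q / 2) + x2 / x * (p - q) / (x1 / x - x2 / x))).
  by field; rewrite hx hd.
have i2 : 2 * (z12 - z) * (x2 - x1) + (p - q) * (x1 + x2) = 2 * (x2 - x1) * ((z12 + z1 - q / 2) - ((z1 + z - p / 2) + x1 / x * (p - q) / (x1 / x - x2 / x))).
  by field; rewrite hx hd.
have i3 : 2 * (x12 - x) * (z2 - z1) + (p - q) * (x12 + x) = -2 * x2 * ((z1 + z - p / 2) - (z2 + z - q / 2)) * (x12 / x2 - (1 / (x2 / x) + (p - q) / (x2 / x * ((z1 + z - p / 2) - (z2 + z - q / 2))))).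
  by field; rewrite hx hw hx2.
have i4 : 2 * (x12 - x) * (z2 - z1) + (p - q) * (x12 + x) = -2 * x1 * ((z1 + z - p / 2) - (z2 + z - q / 2)) * (x12 / x1 - (1 / (x1 / x) + (p - q) / (x1 / x * ((z1 + z - p / 2) - (z2 + z - q / 2))))).
  by field; rewrite hx hw hx1.
have n2 : -2 != 0 :> F by rewrite oppr_eq0 pnatr_eq0.
have z2n : 2 != 0 :> F by rewrite pnatr_eq0.
rewrite /mH1 /dH2; split.
  case=> e1 _ e3 _.
  by rewrite i1 i3 e1 e3 !subrr !mulr0.
case=> d1 d2.
split.
- move: d1; rewrite i1 => /(mul_eq0_r (mulf_neq0 z2n hd')) /eqP; rewrite subr_eq0 => /eqP //.
- move: d1; rewrite i2 => /(mul_eq0_r (mulf_neq0 z2n hd')) /eqP; rewrite subr_eq0 => /eqP //.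
- move: d2; rewrite i3 => /(mul_eq0_r (mulf_neq0 (mulf_neq0 n2 hx2) huv)) /eqP; rewrite subr_eq0 => /eqP //.
- move: d2; rewrite i4 => /(mul_eq0_r (mulf_neq0 (mulf_neq0 n2 hx1) huv)) /eqP; rewrite subr_eq0 => /eqP //.
Qed.

Definition Zs {F : numFieldType} (p q z x1 x2 : F) := z + (p-q)*(x1+x2)/(2*(x1-x2)).
Definition Xs {F : numFieldType} (p q x z1 z2 : F) := x*(2*(z2-z1)-(p-q))/(2*(z2-z1)+(p-q)).

Lemma Pb1 {F : numFieldType} (x z1 z2 z3 p1 p2 p3 : F) :
  2*(z2-z1)+(p1-p2) != 0 -> 2*(z3-z1)+(p1-p3) != 0 -> 2*(z3-z2)+(p2-p3) != 0 ->
  let x12 := Xs p1 p2 x z1 z2 in let x13 := Xs p1 p3 x z1 z3 in let x23 := Xs p2 p3 x z2 z3 in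
  (2*(z1-z2)*(x12-x13) + (p2-p3)*(x12+x13))*(x23-x12) + (p1-p3)*(x12+x23)*(x12-x13) = 0.
Proof. move=> h1 h2 h3 /=; rewrite /Xs. by field; rewrite h1 h2 h3. Qed.

Lemma Pc1 {F : numFieldType} (x z1 z2 z3 p1 p2 p3 : F) :
  2*(z2-z1)+(p1-p2) != 0 -> 2*(z3-z1)+(p1-p3) != 0 -> 2*(z3-z2)+(p2-p3) != 0 ->
  let x12 := Xs p1 p2 x z1 z2 in let x13 := Xs p1 p3 x z1 z3 in let x23 := Xs p2 p3 x z2 z3 in
  (2*(z1-z3)*(x12-x13) + (p2-p3)*(x12+x13))*(x23-x13) + (p1-p2)*(x13+x23)*(x12-x13) = 0.
Proof. move=> h1 h2 h3 /=; rewrite /Xs. by field; rewrite h1 h2 h3. Qed.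

Lemma Pb2 {F : numFieldType} (x1 x2 x3 z p1 p2 p3 : F) :
  x1 - x2 != 0 -> x1 - x3 != 0 -> x2 - x3 != 0 ->
  let z12 := Zs p1 p2 z x1 x2 in let z13 := Zs p1 p3 z x1 x3 in let z23 := Zs p2 p3 z x2 x3 in
  2*(x1*(2*(z13-z12)-(p2-p3)) - x2*(2*(z13-z12)+(p2-p3)))*(z23-z12)
   + (p1-p3)*(x1*(2*(z13-z12)-(p2-p3)) + x2*(2*(z13-z12)+(p2-p3))) = 0.
Proof. move=> h1 h2 h3 /=; rewrite /Zs. by field; rewrite h1 h2 h3. Qed.

Lemma Pc2 {F : numFieldType} (x1 x2 x3 z p1 p2 p3 : F) :
  x1 - x2 != 0 -> x1 - x3 != 0 -> x2 - x3 != 0 ->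
  let z12 := Zs p1 p2 z x1 x2 in let z13 := Zs p1 p3 z x1 x3 in let z23 := Zs p2 p3 z x2 x3 in
  2*(x1*(2*(z13-z12)-(p2-p3)) - x3*(2*(z13-z12)+(p2-p3)))*(z23-z13)
   + (p1-p2)*(x1*(2*(z13-z12)-(p2-p3)) + x3*(2*(z13-z12)+(p2-p3))) = 0.
Proof. move=> h1 h2 h3 /=; rewrite /Zs. by field; rewrite h1 h2 h3. Qed.

Lemma dH2_solve {F : numFieldType} (p q x x1 x2 X z z1 z2 Z : F) :
  dH2_generic p q x x1 x2 z z1 z2 -> dH2 p q x x1 x2 X z z1 z2 Z ->
  Z = Zs p q z x1 x2 /\ X = Xs p q x z1 z2.
Proof.
rewrite /dH2_generic /dH2 /Zs /Xs -subr_eq0 => -[hd he] [e1 e2].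
have hd' : x2 - x1 != 0 by rewrite -opprB oppr_eq0.
have z2n : 2 != 0 :> F by rewrite pnatr_eq0.
split; apply/eqP; rewrite -subr_eq0; apply/eqP.
  have i : 2*(Z-z)*(x2-x1) + (p-q)*(x1+x2) = 2*(x2-x1)*(Z - (z + (p-q)*(x1+x2)/(2*(x1-x2)))).
    by field; rewrite hd.
  by move: e1; rewrite i => /(mul_eq0_r (mulf_neq0 z2n hd')).
have i : 2*(X-x)*(z2-z1) + (p-q)*(X+x) = (2*(z2-z1)+(p-q))*(X - x*(2*(z2-z1)-(p-q))/(2*(z2-z1)+(p-q))).
  by field; rewrite he.
by move: e2; rewrite i => /(mul_eq0_r he).
Qed.

Lemma dH2_ok {F : numFieldType} (p q x x1 x2 z z1 z2 : F) :
  dH2_generic p q x x1 x2 z z1 z2 ->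
  dH2 p q x x1 x2 (Xs p q x z1 z2) z z1 z2 (Zs p q z x1 x2).
Proof.
rewrite /dH2_generic /dH2 /Zs /Xs -subr_eq0 => -[hd he].
by split; field; rewrite ?hd ?he.
Qed.

Arguments dH2_solve {F p q x x1 x2 X z z1 z2 Z}.
Arguments dH2_ok {F p q x x1 x2 z z1 z2}.

Lemma div_eq0 {F : numFieldType} (a b P : F) : b != 0 -> a = P / b -> P = 0 -> a = 0.
Proof. by move=> _ -> ->; rewrite mul0r. Qed.

Lemma part2 (F : numFieldType) : threeD_compatible (@dH2 F) (@dH2_generic F).
Proof.
move=> p1 p2 p3 x x1 x2 x3 z z1 z2 z3 x12 x13 x23 z12 z13 z23 g12 g13 g23 ga gb gc q12 q13 q23.
have [hz12 hx12] := dH2_solve g12 q12.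
have [hz13 hx13] := dH2_solve g13 q13.
have [hz23 hx23] := dH2_solve g23 q23.
have [d12 e12] := g12; have [d13 e13] := g13; have [d23 e23] := g23.
rewrite -subr_eq0 in d12; rewrite -subr_eq0 in d13; rewrite -subr_eq0 in d23.
have [da ea'] := ga; rewrite -subr_eq0 in da.
exists (Xs p2 p3 x1 z12 z13), (Zs p2 p3 z1 x12 x13).
have ea := dH2_ok ga.
have eb : dH2 p1 p3 x2 x12 x23 (Xs p2 p3 x1 z12 z13) z2 z12 z23 (Zs p2 p3 z1 x12 x13).
  split.
    apply: (@div_eq0 _ _ (x12 - x13) ((2*(z1-z2)*(x12-x13) + (p2-p3)*(x12+x13))*(x23-x12) + (p1-p3)*(x12+x23)*(x12-x13))) => //.
      by rewrite /Zs; field; rewrite da.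
    by rewrite hx12 hx13 hx23; apply: Pb1.
  apply: (@div_eq0 _ _ (2*(z13-z12)+(p2-p3)) (2*(x1*(2*(z13-z12)-(p2-p3)) - x2*(2*(z13-z12)+(p2-p3)))*(z23-z12)
   + (p1-p3)*(x1*(2*(z13-z12)-(p2-p3)) + x2*(2*(z13-z12)+(p2-p3))))) => //.
    by rewrite /Xs; field; rewrite ea'.
  by rewrite hz12 hz13 hz23; apply: Pb2.
have ec : dH2 p1 p2 x3 x13 x23 (Xs p2 p3 x1 z12 z13) z3 z13 z23 (Zs p2 p3 z1 x12 x13).
  split.
    apply: (@div_eq0 _ _ (x12 - x13) ((2*(z1-z3)*(x12-x13) + (p2-p3)*(x12+x13))*(x23-x13) + (p1-p2)*(x13+x23)*(x12-x13))) => //.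
      by rewrite /Zs; field; rewrite da.
    by rewrite hx12 hx13 hx23; apply: Pc1.
  apply: (@div_eq0 _ _ (2*(z13-z12)+(p2-p3)) (2*(x1*(2*(z13-z12)-(p2-p3)) - x3*(2*(z13-z12)+(p2-p3)))*(z23-z13)
   + (p1-p2)*(x1*(2*(z13-z12)-(p2-p3)) + x3*(2*(z13-z12)+(p2-p3))))) => //.
    by rewrite /Xs; field; rewrite ea'.
  by rewrite hz12 hz13 hz23; apply: Pc2.
split => // X Z; split => h.
- by have [-> ->] := dH2_solve ga h.
- have [-> ->] := dH2_solve gb h; have [f1 f2] := dH2_solve gb eb.
  by rewrite f1 f2.
- have [-> ->] := dH2_solve gc h; have [f1 f2] := dH2_solve gc ec.
  by rewrite f1 f2.
Qed.

Theorem proposition3p3 (F : numFieldType) :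
  (* (i) under the potential substitution, mH1 on the square with lower-left
     vertex (m,n) is exactly d-H2 on that square *)
  (forall (p q : int -> F) (x z : int -> int -> F) (m n : int),
     x m n != 0 -> x (m + 1) n != 0 -> x m (n + 1) != 0 ->
     s_of x m n - t_of x m n != 0 ->
     u_of p z m n - v_of q z m n != 0 ->
     (mH1 (p m) (q n) (u_of p z m n) (v_of q z m n) (s_of x m n) (t_of x m n)
          (u_of p z m (n + 1)) (v_of q z (m + 1) n)
          (s_of x m (n + 1)) (t_of x (m + 1) n)
      <->
      dH2 (p m) (q n) (x m n) (x (m + 1) n) (x m (n + 1)) (x (m + 1) (n + 1))
          (z m n) (z (m + 1) n) (z m (n + 1)) (z (m + 1) (n + 1)))) /\
  (* (ii) d-H2 is 3D-compatible *)
  threeD_compatible (@dH2 F) (@dH2_generic F).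

Proof.
split; last exact: part2.
move=> p q x z m n h0 h1 h2 hst huv.
exact: part1.
Qed.
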